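(* Let $p$ be a prime and $n\ge 2$, and let $T^+(n,\mathbf{Q}_p)$ be the group (under matrix multiplication) of upper-triangular $n\times n$ matrices over $\mathbf{Q}_p$ with all diagonal entries equal to $1$. For $A=\{a_{j,k}\}$ put $N(A)=\max_{1\le j<k\le n}|a_{j,k}|_p^{1/(k-j)}$. Then $N(A^{-1})=N(A)$ for every $A\in T^+(n,\mathbf{Q}_p)$, and $N((A')^{-1}A)$ defines a left-invariant ultrametric and $N(A(A')^{-1})$ a right-invariant ultrametric on $T^+(n,\mathbf{Q}_p)$, each determining the topology induced from the usual topology on $M_n(\mathbf{Q}_p)$.
   Context: $|\cdot|_p$ denotes the $p$-adic absolute value; $M_n(\mathbf{Q}_p)$ carries the product topology of $\mathbf{Q}_p^{n^2}$. *)

(* Defs.v *)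
From HB Require Import structures.
From mathcomp Require Import all_boot all_order all_algebra.
From mathcomp Require Import boolp reals exp.
Set Implicit Arguments. Unset Strict Implicit. Unset Printing Implicit Defensive.
Import Order.TTheory GRing.Theory Num.Theory.
Local Open Scope ring_scope.

(* The p-adic absolute value on Q: |q|_p = p^(-v_p(q)), |0|_p = 0. *)
Definition padic_abs_rat (R : realType) (p : nat) (q : rat) : R :=
  if q == 0 then 0
  else (p%:R ^+ logn p `|denq q|%N) / (p%:R ^+ logn p `|numq q|%N).

(* (K, abs) is a model of Q_p with its p-adic absolute value: a field with a
   non-archimedean absolute value extending |.|_p on Q, in which Q is dense,
   and which is complete.  Such a pair is unique up to unique isometric
   isomorphism, namely it is the completion Q_p of (Q, |.|_p). *)
Definition is_Qp (R : realType) (p : nat) (K : fieldType) (abs : K -> R) : Prop :=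
  [/\ (forall x : K, abs x = 0 <-> x = 0),
      (forall x y : K, abs (x * y) = abs x * abs y) /\
      (forall x y : K, abs (x + y) <= Num.max (abs x) (abs y)),
      (forall q : rat, abs (ratr q) = padic_abs_rat R p q),
      (forall (x : K) (e : R), 0 < e -> exists q : rat, abs (x - ratr q) < e)
    & (forall u : nat -> K,
        (forall e : R, 0 < e -> exists N : nat, forall m k : nat,
            (N <= m)%N -> (N <= k)%N -> abs (u m - u k) < e) ->
        exists l : K, forall e : R, 0 < e -> exists N : nat, forall m : nat,
            (N <= m)%N -> abs (u m - l) < e)].

Definition unitri (K : fieldType) (n : nat) (A : 'M[K]_n) : Prop :=
  (forall i j : 'I_n, (j < i)%N -> A i j = 0) /\ (forall i : 'I_n, A i i = 1).

Definition Nnorm (R : realType) (K : fieldType) (abs : K -> R) (n : nat)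
  (A : 'M[K]_n) : R :=
  \big[Num.max/0]_(j < n) \big[Num.max/0]_(k < n | (j < k)%N)
     powR (abs (A j k)) (((k - j)%N)%:R)^-1.

Definition is_ultrametric_on (R : realType) (M : Type) (S : M -> Prop)
  (d : M -> M -> R) : Prop :=
  [/\ (forall x y, S x -> S y -> 0 <= d x y),
      (forall x y, S x -> S y -> (d x y = 0 <-> x = y)),
      (forall x y, S x -> S y -> d x y = d y x)
    & (forall x y z, S x -> S y -> S z -> d x z <= Num.max (d x y) (d y z))].

Definition metric_open_in (R : realType) (M : Type) (S : M -> Prop)
  (d : M -> M -> R) (U : M -> Prop) : Prop :=
  forall x, U x -> exists2 e : R, 0 < e & forall y, S y -> d x y < e -> U y.

(* V is open in the product topology of K^(n*n) (product of the topologies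
   of the absolute value on each entry); for a finite product, a set is open
   iff it contains an entrywise box around each of its points. *)
Definition prod_open (R : realType) (K : fieldType) (abs : K -> R) (n : nat)
  (V : 'M[K]_n -> Prop) : Prop :=
  forall X, V X -> exists2 e : R, 0 < e &
    forall Y : 'M[K]_n, (forall i j, abs (Y i j - X i j) < e) -> V Y.

Definition induces_subspace_topology (R : realType) (K : fieldType)
  (abs : K -> R) (n : nat) (S : 'M[K]_n -> Prop) (d : 'M[K]_n -> 'M[K]_n -> R)
  : Prop :=
  forall U : 'M[K]_n -> Prop, (forall X, U X -> S X) ->
    (metric_open_in S d U <->
     exists2 V, prod_open abs V & forall X, U X <-> (V X /\ S X)).

(* Main.v *)
From HB Require Import structures.
From mathcomp Require Import all_boot all_order all_algebra.
From mathcomp Require Import boolp reals exp zify lra.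
Require Import Defs.
Import Order.TTheory GRing.Theory Num.Theory.
Local Open Scope ring_scope.

Section Maxes.
Variable R : realType.
Implicit Types x y z : R.
Lemma mx_l x y : x <= Num.max x y.
Proof. by rewrite /Num.max; case: ifP => // /ltW. Qed.
Lemma mx_r x y : y <= Num.max x y.
Proof. rewrite /Num.max; case: ifP => // /negbT; by rewrite -leNgt. Qed.
Lemma mx_le x y z : x <= z -> y <= z -> Num.max x y <= z.
Proof. by rewrite /Num.max; case: ifP. Qed.
Lemma mx_lt x y z : x < z -> y < z -> Num.max x y < z.
Proof. by rewrite /Num.max; case: ifP. Qed.
End Maxes.
Arguments mx_l {R}. Arguments mx_r {R}. Arguments mx_le {R} [x y z]. Arguments mx_lt {R} [x y z].

Section Main.
Variable R : realType.
Variable K : fieldType.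
Variable abs : K -> R.
Hypothesis abs_eq0 : forall x, abs x = 0 <-> x = 0.
Hypothesis absM : forall x y, abs (x * y) = abs x * abs y.
Hypothesis absD : forall x y, abs (x + y) <= Num.max (abs x) (abs y).
Hypothesis absN1 : abs (-1) = 1.

Lemma abs0 : abs 0 = 0. Proof. by apply/abs_eq0. Qed.
Lemma absN x : abs (- x) = abs x.
Proof. by rewrite -mulN1r absM absN1 mul1r. Qed.
Lemma abs_ge0 x : 0 <= abs x.
Proof. have := absD x (- x); rewrite subrr abs0 absN. by rewrite maxxx. Qed.
Lemma abs1 : abs 1 = 1.
Proof. by have := absM (-1) (-1); rewrite mulrNN mulr1 absN1 mulr1. Qed.

Lemma powR_inv_le (x r : R) (m : nat) : 0 <= x -> 0 <= r -> (0 < m)%N ->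
  (powR x (m%:R^-1) <= r) = (x <= r ^+ m).
Proof.
move=> x0 r0 m0.
have hx : (powR x (m%:R^-1)) ^+ m = x.
  by rewrite -powR_mulrn ?powR_ge0 // -powRrM mulVf ?pnatr_eq0 -?lt0n // powRr1.
by rewrite -{2}hx (ler_pXn2r m0) ?nnegrE ?powR_ge0.
Qed.

Lemma powR_inv_lt (x r : R) (m : nat) : 0 <= x -> 0 <= r -> (0 < m)%N ->
  (powR x (m%:R^-1) < r) = (x < r ^+ m).
Proof.
move=> x0 r0 m0.
have hx : (powR x (m%:R^-1)) ^+ m = x.
  by rewrite -powR_mulrn ?powR_ge0 // -powRrM mulVf ?pnatr_eq0 -?lt0n // powRr1.
by rewrite -{2}hx (ltr_pXn2r m0) ?nnegrE ?powR_ge0.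
Qed.

Variable n : nat.
Implicit Types A B : 'M[K]_n.

Lemma Nnorm_le A r : 0 <= r ->
  (Nnorm abs A <= r <-> forall j k : 'I_n, (j < k)%N -> abs (A j k) <= r ^+ (k - j)).
Proof.
move=> r0; split.
  move=> /bigmax_leP [_ H] j k jk.
  have /bigmax_leP [_ H2] := H j isT.
  by have := H2 k jk; rewrite powR_inv_le ?abs_ge0 // subn_gt0.
move=> H; apply/bigmax_leP; split => // j _; apply/bigmax_leP; split => // k jk.
by rewrite powR_inv_le ?abs_ge0 ?subn_gt0 // H.
Qed.

Lemma Nnorm_lt A r : 0 < r ->
  (Nnorm abs A < r <-> forall j k : 'I_n, (j < k)%N -> abs (A j k) < r ^+ (k - j)).
Proof.
move=> r0; split.
  move=> /bigmax_ltP [_ H] j k jk.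
  have /bigmax_ltP [_ H2] := H j isT.
  by have := H2 k jk; rewrite powR_inv_lt ?abs_ge0 ?ltW // subn_gt0.
move=> H; apply/bigmax_ltP; split => // j _; apply/bigmax_ltP; split => // k jk.
by rewrite powR_inv_lt ?abs_ge0 ?subn_gt0 ?ltW // H.
Qed.

Lemma Nnorm_ge0 A : 0 <= Nnorm abs A.
Proof.
have hm : forall x y : R, 0 <= x -> 0 <= y -> 0 <= Num.max x y.
  by move=> x y hx hy; rewrite /Num.max; case: ifP.
rewrite /Nnorm; elim/big_ind: _ => // j _; elim/big_ind: _ => // k _.
exact: powR_ge0.
Qed.


Definition upper (M : 'M[K]_n) := forall j k : 'I_n, (k < j)%N -> M j k = 0.
Definition bnd (r : R) (M : 'M[K]_n) :=
  upper M /\ forall j k : 'I_n, abs (M j k) <= r ^+ (k - j).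

Lemma abs_sum_le (F : 'I_n -> K) c : 0 <= c -> (forall i, abs (F i) <= c) ->
  abs (\sum_i F i) <= c.
Proof.
move=> c0 H; elim/big_ind: _ => //; first by rewrite abs0.
by move=> x y hx hy; apply: le_trans (absD x y) (mx_le hx hy).
Qed.

Lemma abs_sum_lt (F : 'I_n -> K) c : 0 < c -> (forall i, abs (F i) < c) ->
  abs (\sum_i F i) < c.
Proof.
move=> c0 H; elim/big_ind: _ => //; first by rewrite abs0.
by move=> x y hx hy; apply: le_lt_trans (absD x y) (mx_lt hx hy).
Qed.

Lemma upper_mul {M M' : 'M[K]_n} : upper M -> upper M' -> upper (M *m M').
Proof.
move=> hM hM' j k kj; rewrite mxE big1 // => i _.
case: (ltnP i j) => ij; first by rewrite hM // mul0r.
by rewrite hM' ?mulr0 //; apply: leq_trans kj ij.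
Qed.

Lemma diag_mul M M' i : upper M -> upper M' -> (M *m M') i i = M i i * M' i i.
Proof.
move=> hM hM'; rewrite mxE (bigD1 i) //= big1 ?addr0 // => l li.
case: (ltnP l i) => il; first by rewrite hM // mul0r.
by rewrite hM' ?mulr0 // ltn_neqAle il andbT eq_sym.
Qed.

Lemma bnd_mul {r : R} {M M' : 'M[K]_n} : 0 <= r -> bnd r M -> bnd r M' -> bnd r (M *m M').
Proof.
move=> r0 [uM bM] [uM' bM']; split; first exact: upper_mul.
move=> j k; rewrite mxE; apply: abs_sum_le; first exact: exprn_ge0.
move=> i; rewrite absM.
case: (ltnP i j) => ij; first by rewrite uM // abs0 mul0r exprn_ge0.
case: (ltnP k i) => ki; first by rewrite uM' // abs0 mulr0 exprn_ge0.
have -> : (k - j = (i - j) + (k - i))%N by lia.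
by rewrite exprD ler_pM ?abs_ge0.
Qed.

Lemma bnd1 r : 0 <= r -> bnd r 1%:M.
Proof.
move=> r0; split.
  by move=> j k kj; rewrite mxE; case: eqP => // e; rewrite e ltnn in kj.
move=> j k; rewrite mxE; case: eqP => [->|_]; first by rewrite subnn abs1 expr0.
by rewrite abs0 exprn_ge0.
Qed.

Lemma bnd0 r : 0 <= r -> bnd r 0.
Proof. by move=> r0; split => j k; rewrite mxE // abs0 exprn_ge0. Qed.

Lemma bndD {r : R} {M M' : 'M[K]_n} : bnd r M -> bnd r M' -> bnd r (M + M').
Proof.
move=> [uM bM] [uM' bM']; split => j k; rewrite mxE.
  by move=> kj; rewrite uM // uM' // addr0.
by apply: le_trans (absD _ _) (mx_le (bM _ _) (bM' _ _)).
Qed.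

Lemma bndN {r : R} {M : 'M[K]_n} : bnd r M -> bnd r (- M).
Proof.
move=> [uM bM]; split => j k; rewrite mxE; last by rewrite absN.
by move=> kj; rewrite uM // oppr0.
Qed.

Lemma bnd_sum r m (F : 'I_m -> 'M[K]_n) : 0 <= r -> (forall i, bnd r (F i)) ->
  bnd r (\sum_i F i).
Proof.
move=> r0 H; elim/big_ind: _ => //; first exact: bnd0.
by move=> x y; apply: bndD.
Qed.

Definition mpow (Y : 'M[K]_n) m := iter m (mulmx Y) 1%:M.

Lemma mpow_nil (Y : 'M[K]_n) : (forall j k : 'I_n, (k <= j)%N -> Y j k = 0) ->
  forall m (j k : 'I_n), (k < j + m)%N -> mpow Y m j k = 0.
Proof.
move=> hY; elim=> [|m IH] j k.
  by rewrite addn0 /mpow /= mxE => kj; case: eqP => // e; rewrite e ltnn in kj.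
move=> hk; rewrite /mpow /= mxE big1 // => l _.
case: (leqP l j) => lj; first by rewrite hY // mul0r.
by rewrite -/(mpow Y m) IH ?mulr0 //; lia.
Qed.

Lemma mpow_bnd r (Y : 'M[K]_n) m : 0 <= r -> bnd r Y -> bnd r (mpow Y m).
Proof.
move=> r0 hY; elim: m => [|m IH]; first exact: bnd1.
by rewrite /mpow /=; apply: bnd_mul.
Qed.

Lemma telescope (Y : 'M[K]_n) m :
  (1%:M - Y) *m (\sum_(i < m) mpow Y i) = 1%:M - mpow Y m.
Proof.
elim: m => [|m IH]; first by rewrite big_ord0 mulmx0 /mpow /= subrr.
rewrite big_ord_recr /= mulmxDr IH mulmxBl mul1mx.
by rewrite addrA subrK.
Qed.

Lemma inv_uniq {A B : 'M[K]_n} : A *m B = 1%:M -> invmx A = B.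
Proof.
move=> AB; have [uA _] := mulmx1_unit AB.
by rewrite -(mulKmx uA B) AB mulmx1.
Qed.

Lemma unitri_upper A : unitri A -> upper A.
Proof. by case. Qed.

Lemma unitri_neumann {A} : unitri A ->
  let B := \sum_(i < n) mpow (1%:M - A) i in
  A *m B = 1%:M /\ (forall r, 0 <= r -> bnd r A -> bnd r B).
Proof.
move=> [uA dA] B.
have hY : forall j k : 'I_n, (k <= j)%N -> (1%:M - A) j k = 0.
  move=> j k; rewrite leq_eqVlt => /orP [/eqP/val_inj->|kj].
    by rewrite !mxE eqxx dA subrr.
  by rewrite !mxE uA //; case: eqP => [e|_]; [rewrite e ltnn in kj| rewrite subrr].
split.
  have E : A = 1%:M - (1%:M - A) by rewrite opprB addrC subrK.
  have Hn : mpow (1%:M - A) n = 0.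
    apply/matrixP => j k; rewrite mxE; apply: mpow_nil => //.
    by have := ltn_ord k; lia.
  by rewrite {1}E /B telescope Hn subr0.
move=> r r0 bA; apply: bnd_sum => // i; apply: mpow_bnd => //.
by apply: bndD; [apply: bnd1 | apply: bndN].
Qed.

Lemma unitri_unit {A} : unitri A -> A \in unitmx.
Proof. by move=> hA; have [/mulmx1_unit [] ] := unitri_neumann hA. Qed.

Lemma bnd_of_N {A} {r : R} : unitri A -> 0 <= r -> Nnorm abs A <= r -> bnd r A.
Proof.
move=> [uA dA] r0 hN; split => // j k.
case: (ltngtP j k) => [jk|kj|e].
- exact: ((Nnorm_le A r r0).1 hN j k jk).
- by rewrite uA // abs0 exprn_ge0.
- by rewrite (val_inj e) dA abs1 subnn expr0.
Qed.

Lemma N_of_bnd {A} {r : R} : 0 <= r -> bnd r A -> Nnorm abs A <= r.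
Proof. by move=> r0 [_ bA]; apply/(Nnorm_le A r r0) => j k _; apply: bA. Qed.

Lemma unitri_inv {A} : unitri A -> unitri (invmx A) /\ (forall r, 0 <= r -> bnd r A -> bnd r (invmx A)).
Proof.
move=> hA; have [AB bB] := unitri_neumann hA.
rewrite (inv_uniq AB); split => //.
have [uB _] := bB _ (Nnorm_ge0 A) (bnd_of_N hA (Nnorm_ge0 A) (lexx _)).
split => // i; have := congr1 (fun M : 'M[K]_n => M i i) AB => /=.
by rewrite diag_mul //; [case: hA => _ -> ; rewrite mul1r mxE eqxx | case: hA].
Qed.

Lemma unitri_invmx {A} : unitri A -> unitri (invmx A).
Proof. by move=> /unitri_inv []. Qed.

Lemma unitri_mul {A B} : unitri A -> unitri B -> unitri (A *m B).
Proof.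
move=> [uA dA] [uB dB]; split; first exact: upper_mul.
by move=> i; rewrite diag_mul // dA dB mulr1.
Qed.

Lemma N_inv {A} : unitri A -> Nnorm abs (invmx A) = Nnorm abs A.
Proof.
move=> hA.
have H : forall B, unitri B -> Nnorm abs (invmx B) <= Nnorm abs B.
  move=> B hB; apply: N_of_bnd; first exact: Nnorm_ge0.
  by apply: (unitri_inv hB).2; [apply: Nnorm_ge0 | apply: bnd_of_N; rewrite ?Nnorm_ge0].
apply/le_anti; rewrite H //=.
by rewrite -{1}(invmxK A) H //; apply: unitri_invmx.
Qed.

Lemma N_mul {A B} : unitri A -> unitri B ->
  Nnorm abs (A *m B) <= Num.max (Nnorm abs A) (Nnorm abs B).
Proof.
move=> hA hB; set r := Num.max _ _.
have r0 : 0 <= r by apply: le_trans (Nnorm_ge0 A) (mx_l _ _).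
apply: N_of_bnd => //; apply: bnd_mul => //; apply: bnd_of_N => //.
  exact: mx_l.
exact: mx_r.
Qed.

Lemma invmx_mul {A B} : unitri A -> unitri B -> invmx (A *m B) = invmx B *m invmx A.
Proof.
move=> hA hB; apply: inv_uniq.
by rewrite mulmxA -(mulmxA A) mulmxV ?unitri_unit // mulmx1 mulmxV ?unitri_unit.
Qed.

Lemma N_eq0 {A} : unitri A -> Nnorm abs A = 0 -> A = 1%:M.
Proof.
move=> [uA dA] h0; have hN : Nnorm abs A <= 0 by rewrite h0.
have H := (Nnorm_le A 0 (lexx 0)).1 hN.
apply/matrixP => j k; rewrite mxE; case: (ltngtP j k) => [jk|kj|e].
- have := H j k jk; rewrite expr0n subn_eq0 leqNgt jk /=.
  move=> h; have : abs (A j k) = 0 by apply: le_anti; rewrite h abs_ge0.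
  by move/abs_eq0 => ->; rewrite eq_sym; case: eqP => // e; rewrite e ltnn in jk.
- by rewrite uA //; case: eqP => // e; rewrite e ltnn in kj.
- by rewrite (val_inj e) dA eqxx.
Qed.

Lemma N1 : Nnorm abs (1%:M : 'M[K]_n) = 0.
Proof.
apply/le_anti; rewrite Nnorm_ge0 andbT.
by apply: N_of_bnd => //; apply: bnd1.
Qed.


Definition box (X Y : 'M[K]_n) (e : R) := forall i j, abs (Y i j - X i j) < e.

Lemma bound_ex (M : 'M[K]_n) : exists2 C : R, 0 < C & forall i j, abs (M i j) <= C.
Proof.
set S := \big[Num.max/0]_i \big[Num.max/0]_j abs (M i j).
have S0 : 0 <= S.
  have hm : forall x y : R, 0 <= x -> 0 <= y -> 0 <= Num.max x y.
    by move=> x y hx hy; rewrite /Num.max; case: ifP.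
  rewrite /S; elim/big_ind: _ => // i _; elim/big_ind: _ => // k _.
  exact: abs_ge0.
exists (1 + S); first by lra.
move=> i j; have : abs (M i j) <= S.
  have h1 := le_bigmax 0 (fun j => abs (M i j)) j.
  have h2 := le_bigmax 0 (fun i => \big[Num.max/0]_j abs (M i j)) i.
  exact: le_trans h1 h2.
by move=> h; lra.
Qed.

Lemma mul_box_l (M Z : 'M[K]_n) C eta : 0 < C -> 0 < eta ->
  (forall i j, abs (M i j) <= C) -> (forall i j, abs (Z i j) < eta) ->
  forall i j, abs ((M *m Z) i j) < C * eta.
Proof.
move=> C0 e0 HM HZ i j; rewrite mxE; apply: abs_sum_lt; first exact: mulr_gt0.
move=> l; rewrite absM; apply: le_lt_trans (ler_wpM2r (abs_ge0 _) (HM _ _)) _.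
by rewrite ltr_pM2l.
Qed.

Lemma mul_box_r (M Z : 'M[K]_n) C eta : 0 < C -> 0 < eta ->
  (forall i j, abs (M i j) <= C) -> (forall i j, abs (Z i j) < eta) ->
  forall i j, abs ((Z *m M) i j) < C * eta.
Proof.
move=> C0 e0 HM HZ i j; rewrite mxE; apply: abs_sum_lt; first exact: mulr_gt0.
move=> l; rewrite absM; apply: le_lt_trans (ler_wpM2l (abs_ge0 _) (HM _ _)) _.
by rewrite [C * _]mulrC ltr_pM2r.
Qed.

Lemma close_N (W : 'M[K]_n) e c : unitri W -> 0 < c -> c <= 1 -> c <= e ->
  (forall i j, abs ((W - 1%:M) i j) < c ^+ n) -> Nnorm abs W < e.
Proof.
move=> hW c0 c1 ce H; apply/Nnorm_lt; first exact: lt_le_trans ce.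
move=> j k jk; have := H j k; rewrite !mxE.
have -> : (j == k) = false by apply/eqP => e'; rewrite e' ltnn in jk.
rewrite subr0 => h; apply: lt_le_trans h _.
apply: le_trans (ler_wiXn2l (ltW c0) c1 (_ : (k - j <= n)%N)) _.
  by have := ltn_ord k; lia.
by rewrite (ler_pXn2r (_ : (0 < k - j)%N)) ?nnegrE ?subn_gt0 // ltW // (lt_le_trans c0).
Qed.

Lemma N_close (W : 'M[K]_n) eta : unitri W -> 0 < eta -> eta <= 1 ->
  Nnorm abs W < eta -> forall i j, abs ((W - 1%:M) i j) < eta.
Proof.
move=> [uW dW] e0 e1 hN i j; rewrite !mxE.
case: (ltngtP i j) => [ij|ji|e].
- have -> : (i == j) = false by apply/eqP => e'; rewrite e' ltnn in ij.
  rewrite subr0; apply: lt_le_trans ((Nnorm_lt W eta e0).1 hN i j ij) _.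
  apply: le_trans (ler_wiXn2l (ltW e0) e1 (_ : (1 <= j - i)%N)) _.
    by rewrite subn_gt0.
  by rewrite expr1.
- have -> : (i == j) = false by apply/eqP => e'; rewrite e' ltnn in ji.
  by rewrite uW // subrr abs0.
- by rewrite (val_inj e) eqxx dW subrr abs0.
Qed.

Lemma topo (d : 'M[K]_n -> 'M[K]_n -> R) :
  (forall X e, unitri X -> 0 < e -> exists2 dl, 0 < dl &
     forall Y, unitri Y -> box X Y dl -> d X Y < e) ->
  (forall X e, unitri X -> 0 < e -> exists2 eta, 0 < eta &
     forall Y, unitri Y -> d X Y < eta -> box X Y e) ->
  induces_subspace_topology abs (@unitri K n) d.
Proof.
move=> L1 L2 U hU; split.
- move=> hUo.
  exists (fun Y => exists X, U X /\ exists2 dl, 0 < dl &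
     (forall Z, unitri Z -> box X Z dl -> U Z) /\ box X Y dl).
    move=> Y [X [UX [dl dl0 [hZ hY]]]]; exists dl => // Y' hY'.
    exists X; split => //; exists dl => //; split => // i j.
    have -> : Y' i j - X i j = (Y' i j - Y i j) + (Y i j - X i j).
      by rewrite addrA subrK.
    exact: le_lt_trans (absD _ _) (mx_lt (hY' i j) (hY i j)).
  move=> X; split.
    move=> UX; split; last exact: hU.
    exists X; split => //.
    have [e e0 he] := hUo X UX.
    have [dl dl0 hdl] := L1 X e (hU X UX) e0.
    exists dl => //; split.
      by move=> Z hZ hb; apply: he => //; apply: hdl.
    by move=> i j; rewrite subrr abs0.
  by move=> [[X' [UX' [dl _ [hZ hb]]]] SX]; apply: hZ.
- move=> [V hV hUV] X UX.
  have [VX SX] := (hUV X).1 UX.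
  have [e e0 he] := hV X VX.
  have [eta eta0 heta] := L2 X e SX e0.
  exists eta => // Y SY dY; apply/hUV; split => //; apply: he; exact: heta.
Qed.

Lemma small_c (e : R) : 0 < e -> exists c : R, [/\ 0 < c, c <= 1 & c <= e].
Proof. by move=> e0; case: (leP e 1) => h; [exists e | exists 1]; split => //; lra. Qed.

Lemma small_eta (e C : R) : 0 < e -> 0 < C ->
  exists eta : R, [/\ 0 < eta, eta <= 1 & C * eta <= e].
Proof.
move=> e0 C0; have CC : C * (e / C) = e by rewrite mulrC divfK // gt_eqF.
case: (leP (e / C) 1) => h.
  by exists (e / C); split => //; [exact: divr_gt0 | rewrite CC].
exists 1; split => //; rewrite mulr1.
by move: h; rewrite ltr_pdivlMr // mul1r => /ltW.
Qed.

Lemma dl_sym (X Y : 'M[K]_n) : unitri X -> unitri Y ->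
  Nnorm abs (invmx Y *m X) = Nnorm abs (invmx X *m Y).
Proof.
move=> hX hY; rewrite -N_inv; last by apply: unitri_mul => //; apply: unitri_invmx.
by rewrite invmx_mul ?invmxK //; apply: unitri_invmx.
Qed.

Lemma dr_sym (X Y : 'M[K]_n) : unitri X -> unitri Y ->
  Nnorm abs (X *m invmx Y) = Nnorm abs (Y *m invmx X).
Proof.
move=> hX hY; rewrite -N_inv; last by apply: unitri_mul => //; apply: unitri_invmx.
by rewrite invmx_mul ?invmxK //; apply: unitri_invmx.
Qed.

Lemma topo_left : induces_subspace_topology abs (@unitri K n)
  (fun A A' : 'M[K]_n => Nnorm abs (invmx A' *m A)).
Proof.
apply: topo.
- move=> X e hX e0; have [c [c0 c1 ce]] := small_c _ e0.
  have [C C0 hC] := bound_ex (invmx X).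
  have cn0 : 0 < c ^+ n by rewrite exprn_gt0.
  exists (c ^+ n / C); first exact: divr_gt0.
  move=> Y hY hb; rewrite dl_sym //.
  apply: (close_N _ _ c) => //; first by apply: unitri_mul => //; apply: unitri_invmx.
  have -> : invmx X *m Y - 1%:M = invmx X *m (Y - X).
    by rewrite mulmxBr mulVmx // unitri_unit.
  have -> : c ^+ n = C * (c ^+ n / C) by rewrite mulrC divfK // gt_eqF.
  apply: mul_box_l => //; first exact: divr_gt0.
  by move=> i j; rewrite !mxE; apply: hb.
- move=> X e hX e0; have [C C0 hC] := bound_ex X.
  have [eta [eta0 eta1 hce]] := small_eta _ _ e0 C0.
  exists eta => // Y hY hd i j.
  rewrite dl_sym // in hd.
  have hW : unitri (invmx X *m Y) by apply: unitri_mul => //; apply: unitri_invmx.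
  have H := N_close _ _ hW eta0 eta1 hd.
  have E : Y - X = X *m (invmx X *m Y - 1%:M).
    by rewrite mulmxBr mulmxA mulmxV ?unitri_unit // mul1mx mulmx1.
  have := mul_box_l _ _ _ _ C0 eta0 hC H i j; rewrite -E mxE => h.
  by move: h; rewrite mxE => h; exact: lt_le_trans h hce.
Qed.

Lemma topo_right : induces_subspace_topology abs (@unitri K n)
  (fun A A' : 'M[K]_n => Nnorm abs (A *m invmx A')).
Proof.
apply: topo.
- move=> X e hX e0; have [c [c0 c1 ce]] := small_c _ e0.
  have [C C0 hC] := bound_ex (invmx X).
  have cn0 : 0 < c ^+ n by rewrite exprn_gt0.
  exists (c ^+ n / C); first exact: divr_gt0.
  move=> Y hY hb; rewrite dr_sym //.
  apply: (close_N _ _ c) => //; first by apply: unitri_mul => //; apply: unitri_invmx.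
  have -> : Y *m invmx X - 1%:M = (Y - X) *m invmx X.
    by rewrite mulmxBl mulmxV // unitri_unit.
  have -> : c ^+ n = C * (c ^+ n / C) by rewrite mulrC divfK // gt_eqF.
  apply: mul_box_r => //; first exact: divr_gt0.
  by move=> i j; rewrite !mxE; apply: hb.
- move=> X e hX e0; have [C C0 hC] := bound_ex X.
  have [eta [eta0 eta1 hce]] := small_eta _ _ e0 C0.
  exists eta => // Y hY hd i j.
  rewrite dr_sym // in hd.
  have hW : unitri (Y *m invmx X) by apply: unitri_mul => //; apply: unitri_invmx.
  have H := N_close _ _ hW eta0 eta1 hd.
  have E : Y - X = (Y *m invmx X - 1%:M) *m X.
    by rewrite mulmxBl -mulmxA mulVmx ?unitri_unit // mul1mx mulmx1.
  have := mul_box_r _ _ _ _ C0 eta0 hC H i j; rewrite -E mxE => h.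
  by move: h; rewrite mxE => h; exact: lt_le_trans h hce.
Qed.


Lemma main_sec :
  (forall A : 'M[K]_n, unitri A -> Nnorm abs (invmx A) = Nnorm abs A)
  /\ (is_ultrametric_on (@unitri K n) (fun A A' : 'M[K]_n => Nnorm abs (invmx A' *m A))
      /\ (forall G A A' : 'M[K]_n, unitri G -> unitri A -> unitri A' ->
            Nnorm abs (invmx (G *m A') *m (G *m A)) = Nnorm abs (invmx A' *m A))
      /\ induces_subspace_topology abs (@unitri K n)
           (fun A A' : 'M[K]_n => Nnorm abs (invmx A' *m A)))
  /\ (is_ultrametric_on (@unitri K n) (fun A A' : 'M[K]_n => Nnorm abs (A *m invmx A'))
      /\ (forall G A A' : 'M[K]_n, unitri G -> unitri A -> unitri A' ->
            Nnorm abs ((A *m G) *m invmx (A' *m G)) = Nnorm abs (A *m invmx A'))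
      /\ induces_subspace_topology abs (@unitri K n)
           (fun A A' : 'M[K]_n => Nnorm abs (A *m invmx A'))).
Proof.
have ui := @unitri_invmx; have um := @unitri_mul; have uu := @unitri_unit.
split; first by move=> A hA; apply: N_inv.
split; [split; [|split] | split; [|split]].
- split.
  + by move=> x y _ _; apply: Nnorm_ge0.
  + move=> x y hx hy; split.
      move=> /N_eq0 h; have := h (um _ _ (ui _ hy) hx) => E.
      by rewrite -(mulKVmx (uu _ hy) x) E mulmx1.
    by move=> ->; rewrite mulVmx ?uu // N1.
  + by move=> x y hx hy; rewrite dl_sym.
  + move=> x y z hx hy hz.
    have -> : invmx z *m x = (invmx z *m y) *m (invmx y *m x).
      by rewrite mulmxA -(mulmxA (invmx z)) mulmxV ?uu // mulmx1.
    apply: le_trans (N_mul (um _ _ (ui _ hz) hy) (um _ _ (ui _ hy) hx)) _.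
    by apply: mx_le; [apply: mx_r | apply: mx_l].
- move=> G A A' hG hA hA'.
  by rewrite invmx_mul // -!mulmxA (mulmxA (invmx G)) mulVmx ?uu // mul1mx.
- exact: topo_left.
- split.
  + by move=> x y _ _; apply: Nnorm_ge0.
  + move=> x y hx hy; split.
      move=> /N_eq0 h; have := h (um _ _ hx (ui _ hy)) => E.
      by rewrite -(mulmxKV (uu _ hy) x) E mul1mx.
    by move=> ->; rewrite mulmxV ?uu // N1.
  + by move=> x y hx hy; rewrite dr_sym.
  + move=> x y z hx hy hz.
    have -> : x *m invmx z = (x *m invmx y) *m (y *m invmx z).
      by rewrite mulmxA -(mulmxA x) mulVmx ?uu // mulmx1.
    apply: le_trans (N_mul (um _ _ hx (ui _ hy)) (um _ _ hy (ui _ hz))) _.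
    exact: lexx.
- move=> G A A' hG hA hA'.
  by rewrite invmx_mul // !mulmxA -(mulmxA A) mulmxV ?uu // mulmx1.
- exact: topo_right.
Qed.

End Main.

Theorem mainTheorem5 (R : realType) (p : nat) (hp : prime p) (n : nat)
  (hn : (2 <= n)%N) (K : fieldType) (abs : K -> R) (hK : is_Qp p abs) :
  (forall A : 'M[K]_n, unitri A -> Nnorm abs (invmx A) = Nnorm abs A)
  /\ (is_ultrametric_on (@unitri K n) (fun A A' : 'M[K]_n => Nnorm abs (invmx A' *m A))
      /\ (forall G A A' : 'M[K]_n, unitri G -> unitri A -> unitri A' ->
            Nnorm abs (invmx (G *m A') *m (G *m A)) = Nnorm abs (invmx A' *m A))
      /\ induces_subspace_topology abs (@unitri K n)
           (fun A A' : 'M[K]_n => Nnorm abs (invmx A' *m A)))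
  /\ (is_ultrametric_on (@unitri K n) (fun A A' : 'M[K]_n => Nnorm abs (A *m invmx A'))
      /\ (forall G A A' : 'M[K]_n, unitri G -> unitri A -> unitri A' ->
            Nnorm abs ((A *m G) *m invmx (A' *m G)) = Nnorm abs (A *m invmx A'))
      /\ induces_subspace_topology abs (@unitri K n)
           (fun A A' : 'M[K]_n => Nnorm abs (A *m invmx A'))).
Proof.
case: hK => h0 [hM hD] hQ _ _.
have hN1 : abs (-1) = 1.
  have := hQ ((-1)%:~R); rewrite ratr_int rmorphN1 => ->.
  have -> : ((-1)%:~R : rat) = -1 by rewrite rmorphN1.
  rewrite /padic_abs_rat.
  have -> : numq (-1 : rat) = -1 by [].
  have -> : denq (-1 : rat) = 1 by [].
  by rewrite /= logn1 expr0 divr1.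
exact: (@main_sec R K abs h0 hM hD hN1 n).
Qed.
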